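(* Let $\mathcal H$ be a separable complex Hilbert space and $\mathcal L_0$ a complete reflexive subspace lattice on $\mathcal H$. Let $\mathcal L$ be either $\mathcal L_{n_0}$ (for some integer $n_0\ge2$) or $\mathcal L_\infty$, as defined in the context. Then $\mathrm{R_1}(\operatorname{Alg}\mathcal L)\subset\mathrm{I_d}(\operatorname{Alg}\mathcal L)$ if and only if $\mathrm{R_1}(\operatorname{Alg}\mathcal L_0)\subset\mathrm{I_d}(\operatorname{Alg}\mathcal L_0)$.
   Context: A subspace lattice is a family of closed subspaces containing $\{0\}$ and the whole space, closed under arbitrary closed linear spans ($\vee$) and intersections ($\wedge$); subspaces are identified with orthogonal projections. $\operatorname{Alg}\mathcal L=\{A:AE\subset E\ \forall E\in\mathcal L\}$; $\mathcal L$ is reflexive if it equals the lattice of closed subspaces invariant under all of $\operatorname{Alg}\mathcal L$. For an algebra $\mathcal A$ of operators, $\mathrm{I_d}(\mathcal A)$ is the linear span of the idempotent operators in $\mathcal A$ and $\mathrm{R_1}(\mathcal A)$ is the linear span of the rank-one operators in $\mathcal A$. Construction: for $n_0\ge2$, $\mathcal K_{n_0}=\mathcal H^{(n_0)}$; $\zeta=(a_1,\dots,a_{n_0})\in\mathbb C^{n_0}$ a unit vector with all $a_i\ne0$; $Q_\zeta$ the orthogonal projection onto $\{(a_1x,\dots,a_{n_0}x):x\in\mathcal H\}$; $E_{ij}$ the matrix units of $M_{n_0}(\mathbb C)$, $F_k=\sum_{j=1}^kE_{jj}\otimes I$; $\mathcal L_{n_0}$ is the subspace lattice on $\mathcal K_{n_0}$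 generated by $\{E_{11}\otimes P,Q_\zeta,F_k:P\in\mathcal L_0,2\le k\le n_0\}$. Also $\mathcal K_\infty=\ell^2(\mathbb N)\otimes\mathcal H$; $\eta=(b_1,b_2,\dots)\in\ell^2(\mathbb N)$ a unit vector with all $b_n\ne0$; $Q_\eta$ the orthogonal projection onto $\{(b_1x,b_2x,\dots):x\in\mathcal H\}$; $E_{ij}$ the matrix units of $\mathcal B(\ell^2(\mathbb N))$, $F_k=\sum_{j=1}^kE_{jj}\otimes I$; $\mathcal L_\infty$ is the subspace lattice on $\mathcal K_\infty$ generated by $\{E_{11}\otimes P,Q_\eta,F_k:P\in\mathcal L_0,k\ge2\}$. *)

(* Defs.v *)
From HB Require Import structures.
From mathcomp Require Import all_boot all_order all_algebra.
From mathcomp Require Import boolp classical_sets functions reals.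
From mathcomp Require Export complex.
Set Implicit Arguments. Unset Strict Implicit. Unset Printing Implicit Defensive.
Import Order.TTheory GRing.Theory Num.Theory.
Local Open Scope ring_scope.
Local Open Scope classical_set_scope.

Section Hilbert.
Variable R : realType.
Local Notation C := (R[i]).
Variable V : lmodType C.
Variable ip : V -> V -> C.

Definition ip_norm (x : V) : R := Num.sqrt (complex.Re (ip x x)).

Definition is_inner_product : Prop :=
  [/\ forall a x y z, ip (a *: x + y) z = a * ip x z + ip y z,
      forall x y, ip y x = conjc (ip x y),
      forall x, 0 <= complex.Re (ip x x) &
      forall x, ip x x = 0 -> x = 0].

Definition ip_complete : Prop :=
  forall u : nat -> V,
    (forall e : R, 0 < e -> exists N, forall m n, (N <= m)%N -> (N <= n)%N ->
        ip_norm (u m - u n) < e) ->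
    exists l, forall e : R, 0 < e -> exists N, forall n, (N <= n)%N ->
        ip_norm (u n - l) < e.

Definition ip_separable : Prop :=
  exists d : nat -> V, forall x (e : R), 0 < e -> exists n, ip_norm (x - d n) < e.

Definition complex_hilbert_space : Prop :=
  [/\ is_inner_product, ip_complete & ip_separable].
End Hilbert.

(* Generic notions on a normed space given by a carrier K (an lmodType over  *)
(* C), a domain D : set K (the vectors of the space; setT for H and H^(n),   *)
(* the square-summable sequences for l^2(N) (x) H) and a norm nrm.           *)
(* Closed subspaces are identified with orthogonal projections (as in the    *)
(* paper), so we work with the subspaces themselves.  Operators are maps     *)
(* K -> K, considered on D only (equality of operators = equality on D).     *)
Section Generic.
Variable R : realType.
Local Notation C := (R[i]).
Variable K : lmodType C.
Variable D : set K.
Variable nrm : K -> R.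

Definition norm_cvg (u : nat -> K) (l : K) : Prop :=
  forall e : R, 0 < e -> exists N, forall n, (N <= n)%N -> nrm (u n - l) < e.

Definition closed_subspace (E : set K) : Prop :=
  [/\ E `<=` D, E 0,
      (forall (a : C) x y, E x -> E y -> E (a *: x + y)) &
      forall (u : nat -> K) l, (forall n, E (u n)) -> D l -> norm_cvg u l -> E l].

Definition cspan (F : set (set K)) : set K :=
  [set x | D x /\ forall M, closed_subspace M -> (forall E, F E -> E `<=` M) -> M x].

(* intersection of a family of subspaces (the whole space for the empty family) *)
Definition cmeet (F : set (set K)) : set K :=
  [set x | D x /\ forall E, F E -> E x].

Definition subspace_lattice (L : set (set K)) : Prop :=
  [/\ (forall E, L E -> closed_subspace E),
      L [set 0], L D,
      (forall F, F `<=` L -> L (cspan F)) &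
      (forall F, F `<=` L -> L (cmeet F))].

Definition complete_subspace_lattice (L : set (set K)) : Prop :=
  subspace_lattice L /\
  (forall F, F `<=` L -> L (cspan F)) /\ (forall F, F `<=` L -> L (cmeet F)).

Definition lattice_gen (G : set (set K)) : set (set K) :=
  [set E | forall L, subspace_lattice L -> G `<=` L -> L E].

Definition bounded_op (A : K -> K) : Prop :=
  [/\ forall x, D x -> D (A x),
      forall (a : C) x y, D x -> D y -> A (a *: x + y) = a *: A x + A y &
      exists M : R, forall x, D x -> nrm (A x) <= M * nrm x].

Definition Alg (L : set (set K)) : set (K -> K) :=
  [set A | bounded_op A /\ forall E, L E -> forall x, E x -> E (A x)].

Definition Lat (S : set (K -> K)) : set (set K) :=
  [set E | closed_subspace E /\ forall A, S A -> forall x, E x -> E (A x)].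

Definition reflexive_lattice (L : set (set K)) : Prop := Lat (Alg L) = L.

Definition idempotent_op (A : K -> K) : Prop := forall x, D x -> A (A x) = A x.

Definition rank_one_op (A : K -> K) : Prop :=
  exists y, [/\ D y, y != 0, (forall x, D x -> exists c : C, A x = c *: y) &
                 exists x, D x /\ A x != 0].

Definition in_op_span (S : set (K -> K)) (B : K -> K) : Prop :=
  exists s : seq (C * (K -> K)), (forall p, p \in s -> S p.2) /\
    forall x, D x -> B x = \sum_(p <- s) p.1 *: p.2 x.

Definition Id_span (A : set (K -> K)) := in_op_span (A `&` idempotent_op).
Definition R1_span (A : set (K -> K)) := in_op_span (A `&` rank_one_op).

Definition R1_sub_Id (A : set (K -> K)) : Prop :=
  forall B, R1_span A B -> Id_span A B.
End Generic.

Section Constructions.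
Variable R : realType.
Local Notation C := (R[i]).
Variable V : lmodType C.
Variable nrmH : V -> R.

(* K_{n0} = H^(n0), vectors x : 'I_n0 -> V *)
Definition Kn_norm (n0 : nat) (x : 'I_n0 -> V) : R :=
  Num.sqrt (\sum_(i < n0) nrmH (x i) ^+ 2).

(* K_oo = l^2(N) (x) H = square-summable sequences in H *)
Definition l2_partial (x : nat -> V) : set R :=
  [set \sum_(n < N) nrmH (x n) ^+ 2 | N in [set: nat]].
Definition Kinf_dom : set (nat -> V) := [set x | has_ubound (l2_partial x)].
Definition Kinf_norm (x : nat -> V) : R := Num.sqrt (sup (l2_partial x)).

Variable L0 : set (set V).

(* generators of L_{n0}: E_11 (x) P (P in L0), Q_zeta, F_k (2 <= k <= n0).
   Coordinates are 0-indexed: coordinate 0 is the range of E_11, and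
   F_k is the set of x supported on coordinates 0..k-1. *)
Definition gens_n (n0 : nat) (a : 'I_n0 -> C) : set (set ('I_n0 -> V)) :=
  [set E | (exists P, L0 P /\
              E = [set x | forall i : 'I_n0, if (i == 0 :> nat) then P (x i) else x i = 0])
         \/ E = [set x | exists h : V, forall i, x i = a i *: h]
         \/ (exists k, (2 <= k <= n0)%N /\
              E = [set x | forall i : 'I_n0, (k <= i)%N -> x i = 0])].

Definition L_n (n0 : nat) (a : 'I_n0 -> C) : set (set ('I_n0 -> V)) :=
  lattice_gen [set: 'I_n0 -> V] (@Kn_norm n0) (gens_n a).

Definition gens_inf (b : nat -> C) : set (set (nat -> V)) :=
  [set E | (exists P, L0 P /\
              E = [set x | Kinf_dom x /\ P (x 0%N) /\ forall i, i != 0%N -> x i = 0])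
         \/ E = [set x | exists h : V, forall i, x i = b i *: h]
         \/ (exists k, (2 <= k)%N /\
              E = [set x | forall i, (k <= i)%N -> x i = 0])].

Definition L_inf (b : nat -> C) : set (set (nat -> V)) :=
  lattice_gen Kinf_dom Kinf_norm (gens_inf b).
End Constructions.

Definition series_to (R : realType) (u : nat -> R) (l : R) : Prop :=
  forall e : R, 0 < e -> exists N, forall M, (N <= M)%N -> `|\sum_(n < M) u n - l| < e.

Definition unit_vec_fin (R : realType) (n0 : nat) (a : 'I_n0 -> R[i]) : Prop :=
  \sum_(i < n0) complex.Re (`|a i| ^+ 2) = 1.

Definition unit_vec_l2 (R : realType) (b : nat -> R[i]) : Prop :=
  series_to (fun n => complex.Re (`|b n| ^+ 2)) 1.

(* Main.v *)
Require Import Defs.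
From HB Require Import structures.
From mathcomp Require Import all_boot all_order all_algebra.
From mathcomp Require Import boolp classical_sets functions reals complex.
From mathcomp Require Import ring lra.
Import Order.TTheory GRing.Theory Num.Theory.
Local Open Scope ring_scope.
Local Open Scope classical_set_scope.
Set Implicit Arguments. Unset Strict Implicit. Unset Printing Implicit Defensive.
Section IP.
Variable R : realType.
Local Notation C := R[i].

Definition nabs (a : C) : R := complex.Re `|a|.

Lemma nabsE (a : C) : `|a| = ((nabs a)%:C)%C.
Proof.
rewrite /nabs; have h0 : 0 <= `|a| by [].
rewrite [LHS]complexE (ger0_Im h0) mulr0 addr0 //.
Qed.

Lemma nabs_ge0 a : 0 <= nabs a.
Proof. have : (0 : C) <= `|a| by []. by rewrite nabsE lecR. Qed.

Lemma nabsM a b : nabs (a * b) = nabs a * nabs b.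
Proof. apply: (@complexI R). by rewrite -nabsE normrM !nabsE -rmorphM. Qed.

Lemma nabs_eq0 a : nabs a = 0 -> a = 0.
Proof. move=> h; apply/normr0_eq0. by rewrite nabsE h. Qed.

Lemma nabs0 : nabs 0 = 0.
Proof. by apply: (@complexI R); rewrite -nabsE normr0. Qed.

Lemma nabsN1 : nabs (-1) = 1.
Proof. by apply: (@complexI R); rewrite -nabsE normrN normr1. Qed.

Lemma nabsN a : nabs (- a) = nabs a.
Proof. by apply: (@complexI R); rewrite -!nabsE normrN. Qed.

Lemma nabsD a b : nabs (a + b) <= nabs a + nabs b.
Proof. by rewrite -lecR rmorphD /= -!nabsE ler_normD. Qed.


Variable V : lmodType C.
Variable ip : V -> V -> C.
Hypothesis Hip : is_inner_product ip.

Lemma ip0l z : ip 0 z = 0.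
Proof.
case: Hip => lin _ _ _.
have := lin 1 0 0 z; rewrite scale1r addr0 mul1r => /eqP.
by rewrite eq_sym -subr_eq0 addrK => /eqP.
Qed.

Lemma ipDl x y z : ip (x + y) z = ip x z + ip y z.
Proof. case: Hip => lin _ _ _. by have := lin 1 x y z; rewrite scale1r mul1r. Qed.

Lemma ipZl a x z : ip (a *: x) z = a * ip x z.
Proof. case: Hip => lin _ _ _. by have := lin a x 0 z; rewrite addr0 ip0l addr0. Qed.

Lemma ipNl x z : ip (- x) z = - ip x z.
Proof. by rewrite -scaleN1r ipZl mulN1r. Qed.

Lemma ipC x y : ip y x = ((ip x y)^*)%C.
Proof. by case: Hip => _ h _ _; rewrite h. Qed.

Lemma ipDr x y z : ip z (x + y) = ip z x + ip z y.
Proof. by rewrite ipC ipDl rmorphD /= -!ipC. Qed.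

Lemma ipZr a x z : ip z (a *: x) = (a^*)%C * ip z x.
Proof. by rewrite ipC ipZl rmorphM /= -ipC. Qed.


Lemma ipxx_real x : ip x x = ((complex.Re (ip x x))%:C)%C.
Proof.
have h := ipC x x. move: h; case: (ip x x) => a b /= [] hb.
have -> : b = 0.
  have : b + b = 0 by rewrite {1}hb addNr.
  by move=> /eqP; rewrite -mulr2n -mulr_natr mulf_eq0 pnatr_eq0 orbF => /eqP.
by [].
Qed.
Lemma Re_ge0 x : 0 <= complex.Re (ip x x).
Proof. by case: Hip. Qed.

Lemma ipxxZ a x : complex.Re (ip (a *: x) (a *: x)) = nabs a ^+ 2 * complex.Re (ip x x).
Proof.
rewrite ipZl ipZr mulrA -sqr_normc nabsE ipxx_real -rmorphXn -rmorphM /=.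
by [].
Qed.

Lemma ipn_ge0 x : 0 <= ip_norm ip x.
Proof. exact: sqrtr_ge0. Qed.

Lemma ipn_sq x : ip_norm ip x ^+ 2 = complex.Re (ip x x).
Proof. by rewrite /ip_norm sqr_sqrtr // Re_ge0. Qed.

Lemma ipn_def x : ip_norm ip x = 0 -> x = 0.
Proof.
move=> h; case: Hip => _ _ _ d; apply: d.
rewrite ipxx_real -ipn_sq h expr0n /=. by [].
Qed.

Lemma ipn_hom a x : ip_norm ip (a *: x) = nabs a * ip_norm ip x.
Proof.
rewrite /ip_norm ipxxZ sqrtrM ?sqrtr_sqr ?ger0_norm ?nabs_ge0 //.
by rewrite exprn_ge0 // nabs_ge0.
Qed.

Lemma ipNr x z : ip z (- x) = - ip z x.
Proof. by rewrite ipC ipNl rmorphN /= -ipC. Qed.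

Lemma ipn_par x y : ip_norm ip (x + y) ^+ 2 <= 2 * ip_norm ip x ^+ 2 + 2 * ip_norm ip y ^+ 2.
Proof.
rewrite !ipn_sq.
have e : ip (x + y) (x + y) + ip (x - y) (x - y) = 2 * ip x x + 2 * ip y y.
  rewrite !ipDl !ipDr !ipNl !ipNr opprK. 
  ring.
have h2 := Re_ge0 (x - y).
have r2 (z : C) : complex.Re (2 * z) = 2 * complex.Re z by rewrite mulr_natl raddfMn mulr_natl.
have := congr1 (@complex.Re R) e. rewrite !raddfD /= !r2 => h.
lra.
Qed.

Lemma ipn_tri x y : ip_norm ip (x + y) <= 2 * (ip_norm ip x + ip_norm ip y).
Proof.
have h := ipn_par x y; have h1 := ipn_ge0 (x + y); have h2 := ipn_ge0 x; have h3 := ipn_ge0 y.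
move: h; rewrite !expr2 => h. nra.
Qed.

Lemma ipnN x : ip_norm ip (- x) = ip_norm ip x.
Proof. by rewrite -scaleN1r ipn_hom nabsN1 mul1r. Qed.

Lemma ipn_cvg_uniq u l l' : norm_cvg (ip_norm ip) u l -> norm_cvg (ip_norm ip) u l' -> l = l'.
Proof.
move=> h1 h2; apply/eqP; rewrite -subr_eq0; apply/eqP; apply: ipn_def.
apply/eqP; rewrite eq_le ipn_ge0 andbT; rewrite leNgt; apply/negP => hd.
have he : 0 < ip_norm ip (l - l') / 8 by rewrite divr_gt0.
have [N1 hN1] := h1 _ he; have [N2 hN2] := h2 _ he.
have a1 := hN1 (maxn N1 N2) (leq_maxl _ _); have a2 := hN2 (maxn N1 N2) (leq_maxr _ _).
set m := maxn N1 N2 in a1 a2.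
have e : l - l' = (u m - l') + - (u m - l) by rewrite opprB [RHS]addrC addrA subrK.
have := ipn_tri (u m - l') (- (u m - l)); rewrite -e ipnN.
lra.
Qed.

End IP.
Section Gen.
Variable R : realType.
Local Notation C := R[i].
Variable K : lmodType C.
Variable D : set K.
Variable nrm : K -> R.

Record nspace : Prop := NSpace {
  ns0 : D 0;
  nsc : forall a x y, D x -> D y -> D (a *: x + y);
  nsge0 : forall x, 0 <= nrm x;
  nsdef : forall x, D x -> nrm x = 0 -> x = 0;
  nshom : forall a x, D x -> nrm (a *: x) = nabs a * nrm x }.

Hypothesis NS : nspace.

Lemma DD x y : D x -> D y -> D (x + y).
Proof. by move=> hx hy; have := nsc NS 1 hx hy; rewrite scale1r. Qed.
Lemma DZ a x : D x -> D (a *: x).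
Proof. by move=> hx; have := nsc NS a hx (ns0 NS); rewrite addr0. Qed.
Lemma DN x : D x -> D (- x).
Proof. by move=> hx; rewrite -scaleN1r; apply: DZ. Qed.
Lemma DB x y : D x -> D y -> D (x - y).
Proof. by move=> hx hy; apply: DD => //; apply: DN. Qed.

Lemma nrmN x : D x -> nrm (- x) = nrm x.
Proof. by move=> hx; rewrite -scaleN1r (nshom NS) // nabsN1 mul1r. Qed.

Section CS.
Variable E : set K.
Hypothesis HE : closed_subspace D nrm E.
Lemma cs_sub x : E x -> D x. Proof. by case: HE => h _ _ _; apply: h. Qed.
Lemma cs0 : E 0. Proof. by case: HE. Qed.
Lemma csc a x y : E x -> E y -> E (a *: x + y). Proof. by case: HE => _ _ h _; apply: h. Qed.
Lemma csD x y : E x -> E y -> E (x + y).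
Proof. by move=> hx hy; have := csc 1 hx hy; rewrite scale1r. Qed.
Lemma csZ a x : E x -> E (a *: x).
Proof. by move=> hx; have := csc a hx cs0; rewrite addr0. Qed.
Lemma csN x : E x -> E (- x).
Proof. by move=> hx; rewrite -scaleN1r; apply: csZ. Qed.
Lemma csB x y : E x -> E y -> E (x - y).
Proof. by move=> hx hy; apply: csD => //; apply: csN. Qed.
Lemma csZV a x : a != 0 -> E (a *: x) -> E x.
Proof. by move=> ha h; have := csZ a^-1 h; rewrite scalerA mulVf // scale1r. Qed.
End CS.

Lemma D_closed : closed_subspace D nrm D.
Proof. split=> //; [exact: ns0 NS | exact: nsc NS]. Qed.

Lemma zero_closed : closed_subspace D nrm [set 0].
Proof.
split.
- by move=> x ->; apply: ns0 NS.
- by [].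
- by move=> a x y /= -> ->; rewrite scaler0 addr0.
move=> u l hu hl hc; change (l = 0); apply: (nsdef NS) => //.
apply/eqP; rewrite eq_le (nsge0 NS) // andbT leNgt; apply/negP => hp.
have [N hN] := hc _ hp; have := hN N (leqnn N).
by rewrite hu sub0r nrmN // ltxx.
Qed.

Lemma cspan_closed F : closed_subspace D nrm (cspan D nrm F).
Proof.
split.
- by move=> x [].
- split; first exact: ns0 NS. by move=> M hM _; apply: cs0.
- move=> a x y [hx1 hx2] [hy1 hy2]; split; first exact: nsc.
  by move=> M hM hF; apply: csc => //; [apply: hx2 | apply: hy2].
- move=> u l hu hl hc; split => // M hM hF.
  case: (hM) => h1 h2 h3 h4; apply: h4 hc => // n.
  by case: (hu n) => _ h; apply: h.
Qed.

Lemma cmeet_closed F : (forall E, F E -> closed_subspace D nrm E) -> closed_subspace D nrm (cmeet D F).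
Proof.
move=> hF; split.
- by move=> x [].
- by split; [exact: ns0 NS | move=> E hE; apply: cs0; apply: hF].
- move=> a x y [hx1 hx2] [hy1 hy2]; split; first exact: nsc.
  by move=> E hE; apply: csc; [apply: hF | apply: hx2 | apply: hy2].
- move=> u l hu hl hc; split => // E hE.
  case: (hF E hE) => h1 h2 h3 h4; apply: h4 hc => // n.
  by case: (hu n) => _ h; apply: h.
Qed.

Section Lin.
Variable A : K -> K.
Hypothesis HA : bounded_op D nrm A.
Lemma opD x : D x -> D (A x). Proof. by case: HA => h _ _; apply: h. Qed.
Lemma oplin a x y : D x -> D y -> A (a *: x + y) = a *: A x + A y.
Proof. by case: HA => _ h _; apply: h. Qed.
Lemma op0 : A 0 = 0.
Proof.
have := oplin 1 (ns0 NS) (ns0 NS); rewrite !scale1r addr0 => /eqP.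
by rewrite eq_sym -subr_eq0 addrK => /eqP.
Qed.
Lemma opDD x y : D x -> D y -> A (x + y) = A x + A y.
Proof. by move=> hx hy; have := oplin 1 hx hy; rewrite !scale1r. Qed.
Lemma opZ a x : D x -> A (a *: x) = a *: A x.
Proof. by move=> hx; have := oplin a hx (ns0 NS); rewrite !addr0 op0 addr0. Qed.
Lemma opN x : D x -> A (- x) = - A x.
Proof. by move=> hx; rewrite -scaleN1r opZ // scaleN1r. Qed.
Lemma opB x y : D x -> D y -> A (x - y) = A x - A y.
Proof. by move=> hx hy; rewrite opDD ?opN //; apply: DN. Qed.
Lemma opbnd : exists M, 0 <= M /\ forall x, D x -> nrm (A x) <= M * nrm x.
Proof.
case: HA => _ _ [M hM]; exists `|M|; split => // x hx.
apply: le_trans (hM x hx) _; apply: ler_wpM2r; [exact: (nsge0 NS) | exact: ler_norm].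
Qed.
Lemma op_cvg u l : (forall n, D (u n)) -> D l -> norm_cvg nrm u l -> norm_cvg nrm (fun n => A (u n)) l -> True.
Proof. by []. Qed.
End Lin.

Lemma pre_closed A M : bounded_op D nrm A -> closed_subspace D nrm M ->
  closed_subspace D nrm [set y | D y /\ M (A y)].
Proof.
move=> hA hM; split.
- by move=> x [].
- by split; [exact: ns0 NS | rewrite op0 //; apply: cs0].
- move=> a x y [hx1 hx2] [hy1 hy2]; split; first exact: nsc.
  by rewrite oplin //; apply: csc.
- move=> u l hu hl hc; split => //.
  case: hM => h1 h2 h3 h4; apply: (h4 (fun n => A (u n))); first by move=> n; case: (hu n).
    exact: opD.
  have [Mb [hM0 hMb]] := opbnd hA.
  move=> e he; have he' : 0 < e / (Mb + 1) by rewrite divr_gt0 // ltr_pwDr.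
  have [N hN] := hc _ he'; exists N => n hn.
  have hun : D (u n) by case: (hu n).
  rewrite -opB //; apply: le_lt_trans (hMb _ (DB hun hl)) _.
  have := hN n hn; have := nsge0 NS (u n - l).
  rewrite ltr_pdivlMr ?ltr_pwDr // => h0 h5; nra.
Qed.

Lemma Alg_gen G A : (forall E, G E -> closed_subspace D nrm E) -> bounded_op D nrm A ->
  (forall E, G E -> forall x, E x -> E (A x)) -> Alg D nrm (lattice_gen D nrm G) A.
Proof.
move=> hG hA hinv; split => // E hE.
have : Lat D nrm [set A] E.
  apply: hE; last by move=> E' hE'; split; [apply: hG | move=> B -> x hx; apply: hinv].
  split.
  - by move=> E' [].
  - by split; [exact: zero_closed | move=> B -> x ->; rewrite op0].
  - split; first exact: D_closed. by move=> B -> x hx; apply: opD.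
  - move=> F hF; split; first exact: cspan_closed.
    move=> B -> x [hx1 hx2]; split; first exact: opD.
    move=> M hM hFM.
    have hpre := pre_closed hA hM.
    suff : [set y | D y /\ M (A y)] x by case.
    apply: hx2; first exact: hpre.
    move=> E' hE' y hy; case: (hF _ hE') => hc h; split; first exact: (cs_sub hc).
    by apply: (hFM E' hE'); apply: h.
  - move=> F hF; split; first by apply: cmeet_closed => E' /hF [].
    move=> B -> x [hx1 hx2]; split; first exact: opD.
    by move=> E' hE'; case: (hF _ hE') => _ h; apply: h => //; apply: hx2.
by case=> _ h x hx; apply: h.
Qed.

Lemma Alg_gen_inv G A E x : Alg D nrm (lattice_gen D nrm G) A -> G E -> E x -> E (A x).
Proof. by case=> _ h hE hx; apply: h => // L _; apply. Qed.

Definition r1 (g : K -> C) (w : K) := fun x => g x *: w.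
Definition glin (g : K -> C) := forall a x y, D x -> D y -> g (a *: x + y) = a * g x + g y.
Definition gbnd (g : K -> C) := exists Kg, forall x, D x -> nabs (g x) <= Kg * nrm x.

Section GL.
Variable g : K -> C.
Hypothesis hg : glin g.
Lemma g0 : g 0 = 0.
Proof.
have := hg 1 (ns0 NS) (ns0 NS); rewrite scale1r addr0 mul1r => /eqP.
by rewrite eq_sym -subr_eq0 addrK => /eqP.
Qed.
Lemma gZ a x : D x -> g (a *: x) = a * g x.
Proof. by move=> hx; have := hg a hx (ns0 NS); rewrite addr0 g0 addr0. Qed.
Lemma gD x y : D x -> D y -> g (x + y) = g x + g y.
Proof. by move=> hx hy; have := hg 1 hx hy; rewrite scale1r mul1r. Qed.
Lemma gN x : D x -> g (- x) = - g x.
Proof. by move=> hx; rewrite -scaleN1r gZ // mulN1r. Qed.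
Lemma gB x y : D x -> D y -> g (x - y) = g x - g y.
Proof. by move=> hx hy; rewrite gD ?gN //; apply: DN. Qed.
End GL.

Lemma r1_bounded g w : D w -> glin g -> gbnd g -> bounded_op D nrm (r1 g w).
Proof.
move=> hw hg [Kg hK]; split.
- by move=> x _; apply: DZ.
- by move=> a x y hx hy; rewrite /r1 hg // scalerDl scalerA.
exists (Kg * nrm w) => x hx; rewrite /r1 (nshom NS) //.
rewrite mulrAC; apply: ler_wpM2r; [exact: (nsge0 NS) | exact: hK].
Qed.

Lemma r1_idem g w : D w -> glin g -> g w = 1 -> Defs.idempotent_op D (r1 g w).
Proof. by move=> hw hg h1 x hx; rewrite /r1 gZ // h1 mulr1. Qed.

Lemma extract B : bounded_op D nrm B -> rank_one_op D B ->
  exists u g, [/\ D u, u != 0, (forall x, D x -> B x = g x *: u), glin g & gbnd g] /\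
                 exists x, D x /\ g x != 0.
Proof.
move=> hB [u [hu hu0 hc [x0 [hx0 hB0]]]].
pose g x := xget 0 [set c | B x = c *: u].
have hg : forall x, D x -> B x = g x *: u.
  by move=> x hx; have := xgetPex 0 (hc x hx).
have canc : forall c1 c2, c1 *: u = c2 *: u -> c1 = c2.
  move=> c1 c2 /eqP; rewrite -subr_eq0 -scalerBl scaler_eq0 (negbTE hu0) orbF subr_eq0.
  by move/eqP.
exists u, g; split; first split => //.
- move=> a x y hx hy; apply: canc.
  by rewrite -(hg _ (nsc NS a hx hy)) (oplin hB) // !hg // scalerDl scalerA.
- have [Mb [hM0 hMb]] := opbnd hB.
  have hnu : 0 < nrm u.
    rewrite lt_neqAle (nsge0 NS) // andbT eq_sym; apply/eqP => h.
    by move: hu0; rewrite (nsdef NS hu h) eqxx.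
  exists (Mb / nrm u) => x hx.
  have := hMb x hx; rewrite hg // (nshom NS) //.
  rewrite mulrAC ler_pdivlMr //.
- exists x0; split => //; apply: contra hB0 => /eqP h.
  by rewrite hg // h scale0r.
Qed.

Section Span.
Variable S : set (K -> K).
Lemma ios_ext B1 B : in_op_span D S B1 -> (forall x, D x -> B x = B1 x) -> in_op_span D S B.
Proof. by move=> [s [h1 h2]] he; exists s; split => // x hx; rewrite he // h2. Qed.
Lemma ios0 B : (forall x, D x -> B x = 0) -> in_op_span D S B.
Proof. by move=> h; exists [::]; split => // x hx; rewrite big_nil h. Qed.
Lemma ios1 E c B : S E -> (forall x, D x -> B x = c *: E x) -> in_op_span D S B.
Proof.
move=> hE h; exists [:: (c, E)]; split.
  by move=> p; rewrite inE => /eqP ->.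
by move=> x hx; rewrite big_cons big_nil addr0 h.
Qed.
Lemma ios_add B1 B2 B : in_op_span D S B1 -> in_op_span D S B2 ->
  (forall x, D x -> B x = B1 x + B2 x) -> in_op_span D S B.
Proof.
move=> [s1 [h11 h12]] [s2 [h21 h22]] h; exists (s1 ++ s2); split.
  by move=> p; rewrite mem_cat => /orP [/h11|/h21].
by move=> x hx; rewrite h // h12 // h22 // big_cat.
Qed.
Lemma ios_scale B1 c B : in_op_span D S B1 -> (forall x, D x -> B x = c *: B1 x) -> in_op_span D S B.
Proof.
move=> [s [h1 h2]] h; exists [seq (c * p.1, p.2) | p <- s]; split.
  by move=> p /mapP [q hq ->] /=; exact: h1 hq.
move=> x hx; rewrite h // h2 // big_map scaler_sumr; apply: eq_bigr => p _.
by rewrite scalerA.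
Qed.
End Span.

Lemma ios_sum (S : set (K -> K)) (s : seq (C * (K -> K))) B :
  (forall p, p \in s -> in_op_span D S p.2) ->
  (forall x, D x -> B x = \sum_(p <- s) p.1 *: p.2 x) -> in_op_span D S B.
Proof.
elim: s B => [|p s IH] B hs hB.
  by apply: ios0 => x hx; rewrite hB // big_nil.
apply: (@ios_add _ (fun x => p.1 *: p.2 x) (fun x => \sum_(q <- s) q.1 *: q.2 x)).
- by apply: ios_scale (hs p (mem_head _ _)) _.
- by apply: IH => // q hq; apply: hs; rewrite inE hq orbT.
by move=> x hx; rewrite hB // big_cons.
Qed.

Lemma R1_sub_Id_of (A : set (K -> K)) :
  (forall B, A B -> rank_one_op D B -> Id_span D A B) -> R1_sub_Id D A.
Proof.
move=> h B [s [hs hB]]; apply: ios_sum hB => p hp.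
by case: (hs p hp) => hA hr; apply: h.
Qed.

Lemma r1_Alg G g x : (forall E, G E -> closed_subspace D nrm E) -> D x -> glin g -> gbnd g ->
  (forall E z, G E -> E z -> g z != 0 -> E x) -> Alg D nrm (lattice_gen D nrm G) (r1 g x).
Proof.
move=> hG hx hg hb hrel; apply: Alg_gen => //; first exact: r1_bounded.
move=> E hE z hz; rewrite /r1.
have [h0|hn] := eqVneq (g z) 0.
  by rewrite h0 scale0r; apply: cs0; apply: hG.
by apply: csZ; [apply: hG | apply: hrel hz hn].
Qed.

Lemma main_w G u g w : (forall E, G E -> closed_subspace D nrm E) -> D u -> glin g -> gbnd g ->
  D w -> g w = 1 -> (forall E z, G E -> E z -> E (g z *: u)) ->
  (forall E z, G E -> E z -> g z != 0 -> E w) ->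
  Id_span D (Alg D nrm (lattice_gen D nrm G)) (r1 g u).
Proof.
move=> hG hu hg hb hw hw1 hinv hrel.
pose w2 := w + u - g u *: w.
have hw2 : D w2 by apply: DB; [apply: DD | apply: DZ].
have gw2 : g w2 = 1.
  by rewrite /w2 gB ?gD ?gZ ?hw1 ?mulr1 ?addrK //; [apply: DD | apply: DZ].
apply: (@ios_add _ (fun x => 1 *: r1 g w2 x) (fun x => (g u - 1) *: r1 g w x)).
- apply: (@ios1 _ (r1 g w2) 1) => //; split; last exact: r1_idem.
  apply: r1_Alg => // E z hE hz hgz.
  have hEu : E u by apply: (csZV (hG _ hE) hgz); apply: hinv hz.
  have hEw := hrel E z hE hz hgz.
  by apply: csB; [apply: hG | apply: csD; [apply: hG | |] | apply: csZ; [apply: hG|]].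
- apply: (@ios1 _ (r1 g w) (g u - 1)) => //; split; last exact: r1_idem.
  exact: r1_Alg.
move=> x hx; rewrite /r1 /w2 scale1r !scalerDr scalerN !scalerA mulrBl mul1r scalerBl [g u * g x]mulrC.
set p := g x *: w; set q := g x *: u; set r := (g x * g u) *: w.
by rewrite addrA subrK [p + q]addrC addrK.
Qed.

End Gen.
Lemma nspaceV (R : realType) (V : lmodType R[i]) (ip : V -> V -> R[i]) :
  is_inner_product ip -> nspace [set: V] (ip_norm ip).
Proof.
move=> Hip; split => //.
- exact: ipn_ge0.
- by move=> x _; apply: ipn_def.
- by move=> a x _; apply: ipn_hom.
Qed.

Section Coord.
Variable R : realType.
Local Notation C := R[i].
Variable V : lmodType C.
Variable ip : V -> V -> C.
Hypothesis Hip : is_inner_product ip.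
Local Notation nH := (ip_norm ip).
Let NSV := nspaceV Hip.
Variable I : eqType.
Variables i0 i1 : I.
Hypothesis i10 : i1 != i0.
Variable D : set (I -> V).
Variable nrm : (I -> V) -> R.
Hypothesis NS : nspace D nrm.
Definition e0 (v : V) : I -> V := fun i => if i == i0 then v else 0.
Hypothesis He0D : forall v, D (e0 v).
Hypothesis He0n : forall v, nrm (e0 v) = nH v.
Hypothesis Hcoord : forall x i, D x -> nH (x i) <= nrm x.
Variable L0 : set (set V).
Hypothesis HL0 : forall P, L0 P -> closed_subspace setT nH P.
Hypothesis HL0T : L0 setT.
Definition E11 (P : set V) : set (I -> V) :=
  [set x | D x /\ P (x i0) /\ forall i, i != i0 -> x i = 0].
Variable G : set (set (I -> V)).
Variable c : C.
Hypothesis HGc : forall E, G E -> closed_subspace D nrm E.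
Hypothesis HGE : forall P, L0 P -> G (E11 P).
Hypothesis HGt : forall E, G E -> (exists P, L0 P /\ E = E11 P) \/
   (forall z, E z -> z i0 = c *: z i1) \/ (forall v, E (e0 v)).
Hypothesis HW : forall u g, D u -> u != 0 -> glin D g -> gbnd D nrm g ->
  (exists x, D x /\ g x != 0) -> (forall h, g (e0 h) = 0) ->
  (forall E z, G E -> E z -> E (g z *: u)) ->
  exists w, D w /\ g w = 1 /\ forall E z, G E -> E z -> g z != 0 -> E w.

Local Notation L := (lattice_gen D nrm G).

Lemma e0_lin a v w : e0 (a *: v + w) = a *: e0 v + e0 w.
Proof.
apply/funext => i; have -> : (a *: e0 v + e0 w) i = a *: e0 v i + e0 w i by [].
by rewrite /e0; case: (i == i0); rewrite ?scaler0 ?addr0.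
Qed.
Lemma e0_0 : e0 0 = 0.
Proof. by apply/funext => i; rewrite /e0; case: (i == i0). Qed.
Lemma e0Z a v : e0 (a *: v) = a *: e0 v.
Proof. by have := e0_lin a v 0; rewrite addr0 e0_0 addr0. Qed.
Lemma e0_i0 v : e0 v i0 = v. Proof. by rewrite /e0 eqxx. Qed.
Lemma e0_i1 v : e0 v i1 = 0. Proof. by rewrite /e0 (negbTE i10). Qed.
Lemma E11_e0 P x : E11 P x -> x = e0 (x i0).
Proof.
move=> [_ [_ h]]; apply/funext => i; rewrite /e0.
by case: eqP => [->|/eqP hi] //; apply: h.
Qed.
Lemma E11_mem P v : P v -> E11 P (e0 v).
Proof.
move=> hv; split => //; split; first by rewrite e0_i0.
by move=> i hi; rewrite /e0 (negbTE hi).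
Qed.
Lemma G11 : G (E11 setT). Proof. exact: HGE. Qed.
Lemma GL E : G E -> L E. Proof. by move=> hE L' _; apply. Qed.

Definition lift (E : V -> V) : (I -> V) -> (I -> V) :=
  fun x => e0 (E (x i0) - c *: E (x i1)).

Lemma lift_bounded E : bounded_op setT nH E -> bounded_op D nrm (lift E).
Proof.
move=> hE; split.
- by move=> x _; apply: He0D.
- move=> a x y hx hy; rewrite /lift /= !(oplin hE) // -e0_lin; congr e0.
  by rewrite scalerDr !scalerBr !scalerA [c * a]mulrC opprD addrACA.
have [M [hM0 hM]] := opbnd NSV hE.
exists (2 * M * (1 + nabs c)) => x hx; rewrite /lift He0n.
have h1 := ipn_tri Hip (E (x i0)) (- (c *: E (x i1))).
rewrite ipnN ?ipn_hom // in h1.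
have h2 : nH (E (x i0)) <= M * nrm x.
  apply: le_trans (hM _ Logic.I) _; apply: ler_wpM2l => //; exact: Hcoord.
have h3 : nH (E (x i1)) <= M * nrm x.
  apply: le_trans (hM _ Logic.I) _; apply: ler_wpM2l => //; exact: Hcoord.
have h4 : nabs c * nH (E (x i1)) <= nabs c * (M * nrm x).
  by apply: ler_wpM2l => //; apply: nabs_ge0.
have -> : 2 * M * (1 + nabs c) * nrm x = 2 * (M * nrm x) + 2 * (nabs c * (M * nrm x)) by ring.
lra.
Qed.

Lemma lift_Alg E : Alg setT nH L0 E -> Alg D nrm L (lift E).
Proof.
move=> [hE hinv]; apply: (Alg_gen NS) => //; first exact: lift_bounded.
move=> E' hE' z hz; case: (HGt hE') => [[P [hP hEq]]|[hQ|hF]].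
- rewrite hEq in hz *.
  have ez := E11_e0 hz; have z1 : z i1 = 0 by case: hz => _ [_ h]; apply: h.
  rewrite /lift z1 (op0 NSV hE) scaler0 subr0; apply: E11_mem.
  by apply: hinv hP _ _; case: hz => _ [].
- rewrite /lift hQ // (opZ NSV hE) // subrr e0_0; exact: (cs0 (HGc hE')).
- exact: hF.
Qed.

Lemma lift_idem E : bounded_op setT nH E -> Defs.idempotent_op setT E ->
  Defs.idempotent_op D (lift E).
Proof.
move=> hE hI x hx; rewrite /lift e0_i0 e0_i1 (op0 NSV hE) scaler0 subr0.
by rewrite (opB NSV hE) // (opZ NSV hE) // !hI.
Qed.

Definition comp (E : (I -> V) -> (I -> V)) : V -> V := fun h => E (e0 h) i0.

Lemma comp_Alg E : Alg D nrm L E -> Alg setT nH L0 (comp E).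
Proof.
move=> hA; have hB := hA.1; split.
- split => //.
  + by move=> a x y _ _; rewrite /comp e0_lin (oplin hB).
  have [M [hM0 hM]] := opbnd NS hB.
  exists M => h _; rewrite /comp; apply: le_trans (Hcoord _ (opD hB (He0D h))) _.
  by rewrite -He0n; apply: hM.
- move=> P hP h hh; rewrite /comp.
  have := Alg_gen_inv hA (HGE hP) (E11_mem hh).
  by case=> _ [].
Qed.

Lemma comp_idem E : Alg D nrm L E -> Defs.idempotent_op D E -> Defs.idempotent_op setT (comp E).
Proof.
move=> hA hI h _; rewrite /comp.
have h1 : E11 setT (E (e0 h)) by apply: Alg_gen_inv hA G11 (E11_mem _).
by rewrite -(E11_e0 h1) hI.
Qed.

Lemma sum_coord (s : seq (C * ((I -> V) -> (I -> V)))) x i :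
  (\sum_(p <- s) p.1 *: p.2 x) i = \sum_(p <- s) p.1 *: p.2 x i.
Proof. elim: s => [|p s IH]; first by rewrite !big_nil. by rewrite !big_cons -IH. Qed.

Lemma sum_e0 (T : Type) (s : seq (C * T)) (F : T -> V) :
  \sum_(p <- s) p.1 *: e0 (F p.2) = e0 (\sum_(p <- s) p.1 *: F p.2).
Proof.
elim: s => [|p s IH]; first by rewrite !big_nil e0_0.
by rewrite !big_cons IH e0_lin.
Qed.

Lemma sum_subV (T : Type) (s : seq (C * T)) (A B : T -> V) :
  \sum_(p <- s) p.1 *: (A p.2 - c *: B p.2) =
  \sum_(p <- s) p.1 *: A p.2 - c *: \sum_(p <- s) p.1 *: B p.2.
Proof.
elim: s => [|p s IH]; first by rewrite !big_nil scaler0 subr0.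
rewrite !big_cons IH (scalerBr p.1) (scalerDr c) !scalerA [c * _]mulrC.
by rewrite opprD addrACA.
Qed.

Theorem coord_fwd : R1_sub_Id D (Alg D nrm L) -> R1_sub_Id setT (Alg setT nH L0).
Proof.
move=> H1; apply: R1_sub_Id_of => B0 hB0 hr.
have hl := lift_Alg hB0.
have hr' : rank_one_op D (lift B0).
  case: hr => y0 [_ hy0 hc [x0 [_ hx0]]].
  exists (e0 y0); split.
  - exact: He0D.
  - by apply: contra hy0 => /eqP h; rewrite -(e0_i0 y0) h.
  - move=> x hx; have [c1 h1] := hc (x i0) Logic.I; have [c2 h2] := hc (x i1) Logic.I.
    exists (c1 - c * c2); rewrite /lift h1 h2 -e0Z; congr e0.
    by rewrite scalerA scalerBl.
  - exists (e0 x0); split; first exact: He0D.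
    rewrite /lift e0_i0 e0_i1 (op0 NSV hB0.1) scaler0 subr0.
    by apply: contra hx0 => /eqP h; rewrite -(e0_i0 (B0 x0)) h.
have hsp : R1_span D (Alg D nrm L) (lift B0).
  apply: (@ios1 _ _ _ _ (lift B0) 1) => //; last by move=> x _; rewrite scale1r.
have [s [hs hsum]] := H1 _ hsp.
exists [seq (p.1, comp p.2) | p <- s]; split.
  move=> p /mapP [q hq ->] /=; have [hq1 hq2] := hs q hq.
  by split; [apply: comp_Alg | apply: comp_idem].
move=> h _; rewrite big_map /=.
have -> : B0 h = lift B0 (e0 h) i0.
  by rewrite /lift e0_i0 e0_i1 (op0 NSV hB0.1) scaler0 subr0 e0_i0.
by rewrite hsum // sum_coord.
Qed.

Theorem coord_bwd : R1_sub_Id setT (Alg setT nH L0) -> R1_sub_Id D (Alg D nrm L).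
Proof.
move=> H0; apply: R1_sub_Id_of => B hB hr.
have [u [g [[hu hu0 hBg hgl hgb] [x0 [hx0 hgx0]]]]] := extract NS hB.1 hr.
have inv : forall E z, G E -> E z -> E (g z *: u).
  move=> E z hE hz; rewrite -hBg; last exact: (cs_sub (HGc hE) hz).
  exact: Alg_gen_inv hB hE hz.
have hlin0 := g0 NS hgl.
case: (pselect (exists h, g (e0 h) != 0)) => [[h0 hh0]|hno].
  have hDe := He0D.
  have hu11 : E11 setT u.
    apply: (csZV (HGc G11) hh0); apply: inv G11 _; exact: E11_mem.
  set u0 := u i0.
  have eu : u = e0 u0 := E11_e0 hu11.
  have hu00 : u0 != 0 by apply: contra hu0 => /eqP h; rewrite eu h e0_0.
  pose ge (h : V) := g (e0 h).
  have hgel : glin setT ge.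
    by move=> a x y _ _; rewrite /ge e0_lin hgl.
  have hgeb : gbnd setT nH ge.
    case: hgb => Kg hK; exists Kg => h _; rewrite /ge -He0n; exact: hK.
  pose B0 := r1 ge u0.
  have hB0 : Alg setT nH L0 B0.
    split; first exact: r1_bounded.
    move=> P hP h hh; rewrite /B0 /r1.
    by have [_ [h1 _]] := inv _ _ (HGE hP) (E11_mem hh).
  have hB0r : rank_one_op setT B0.
    exists u0; split => //.
    - by move=> x _; exists (ge x).
    - exists h0; split => //; rewrite /B0 /r1 scaler_eq0 negb_or hh0 hu00 //.
  have [s [hs hsum]] : Id_span setT (Alg setT nH L0) B0.
    apply: H0; apply: (@ios1 _ _ _ _ B0 1) => //; by move=> x _; rewrite scale1r.
  pose g' x := g x - g (e0 (x i0)) + c * g (e0 (x i1)).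
  have hg'l : glin D g'.
    move=> a x y hx hy; rewrite /g' /= !e0_lin !hgl ?hDe //; ring.
  have hg'b : gbnd D nrm g'.
    case: hgb => Kg hK; exists (`|Kg| * (2 + nabs c)) => x hx.
    have k1 : forall z, D z -> nabs (g z) <= `|Kg| * nrm z.
      move=> z hz; apply: le_trans (hK z hz) _; apply: ler_wpM2r; [exact: (nsge0 NS)|exact: ler_norm].
    have a1 := k1 x hx.
    have a2 : nabs (g (e0 (x i0))) <= `|Kg| * nrm x.
      apply: le_trans (k1 _ (hDe _)) _; rewrite He0n; apply: ler_wpM2l => //; exact: Hcoord.
    have a3 : nabs (g (e0 (x i1))) <= `|Kg| * nrm x.
      apply: le_trans (k1 _ (hDe _)) _; rewrite He0n; apply: ler_wpM2l => //; exact: Hcoord.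
    have a4 : nabs c * nabs (g (e0 (x i1))) <= nabs c * (`|Kg| * nrm x).
      by apply: ler_wpM2l => //; apply: nabs_ge0.
    have t1 := nabsD (g x - g (e0 (x i0))) (c * g (e0 (x i1))).
    have t2 := nabsD (g x) (- g (e0 (x i0))).
    rewrite nabsN in t2; rewrite nabsM in t1.
    have -> : `|Kg| * (2 + nabs c) * nrm x = 2 * (`|Kg| * nrm x) + nabs c * (`|Kg| * nrm x) by ring.
    rewrite /g'; lra.
  have hg'e : forall h, g' (e0 h) = 0.
    by move=> h; rewrite /g' e0_i0 e0_i1 e0_0 hlin0 mulr0 addr0 subrr.
  have inv' : forall E z, G E -> E z -> E (g' z *: u).
    move=> E z hE hz; case: (HGt hE) => [[P [hP hEq]]|[hQ|hF]].
    - have hz' := hz; rewrite hEq in hz'.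
      have z1 : z i1 = 0 by case: hz' => _ [_ h]; apply: h.
      have -> : g' z = 0.
        by rewrite /g' z1 e0_0 hlin0 mulr0 addr0 {1}(E11_e0 hz') subrr.
      rewrite scale0r; exact: (cs0 (HGc hE)).
    - have -> : g' z = g z.
        by rewrite /g' hQ // e0Z (gZ NS hgl) // subrK.
      exact: inv.
    - by rewrite eu; apply: csZ; [apply: HGc | apply: hF].
  apply: (ios_add (B1 := r1 g' u) (B2 := fun x => \sum_(p <- [seq (p.1, lift p.2) | p <- s]) p.1 *: p.2 x)).
  - case: (pselect (exists x, D x /\ g' x != 0)) => [hnz|hnz].
      have [w [hw [hw1 hrel]]] := HW hu hu0 hg'l hg'b hnz hg'e inv'.
      have := main_w NS HGc hu hg'l hg'b hw hw1 inv' hrel.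
      by move=> h; apply: ios_ext h _.
    apply: ios0 => x hx; rewrite /r1.
    case: (eqVneq (g' x) 0) => [->|hne]; first by rewrite scale0r.
    by exfalso; apply: hnz; exists x.
  - exists [seq (p.1, lift p.2) | p <- s]; split => //.
    move=> p /mapP [q hq ->] /=; have [[hq1 hq1'] hq2] := hs q hq.
    split; first exact: lift_Alg.
    exact: lift_idem.
  move=> x hx; rewrite big_map /= /lift.
  rewrite (sum_e0 s (fun E => E (x i0) - c *: E (x i1))).
  rewrite (sum_subV s (fun E => E (x i0)) (fun E => E (x i1))) -!hsum // hBg //.
  rewrite /B0 /r1 /ge eu -e0Z -e0_lin; congr e0.
  rewrite scalerA -scalerBl -scalerDl; congr (_ *: _); rewrite /g'; ring.
have hz : forall h, g (e0 h) = 0.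
  move=> h; case: (eqVneq (g (e0 h)) 0) => // hne; exfalso; apply: hno; by exists h.
have [w [hw [hw1 hrel]]] := HW hu hu0 hgl hgb (ex_intro _ x0 (conj hx0 hgx0)) hz inv.
have := main_w NS HGc hu hgl hgb hw hw1 inv hrel.
by move=> h; apply: ios_ext h _ => x hx; rewrite hBg.
Qed.

End Coord.
Section Shapes.
Variable R : realType.
Local Notation C := R[i].
Variable V : lmodType C.
Variable ip : V -> V -> C.
Hypothesis Hip : is_inner_product ip.
Local Notation nH := (ip_norm ip).
Variable I : eqType.
Variable D : set (I -> V).
Variable nrm : (I -> V) -> R.
Hypothesis NS : nspace D nrm.
Hypothesis Hcoord : forall x i, D x -> nH (x i) <= nrm x.

Lemma ipn0 : nH 0 = 0.
Proof. by rewrite -(scale0r 0) ipn_hom // nabs0 mul0r. Qed.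

Lemma cvg_coord u l i : (forall n, D (u n)) -> D l -> norm_cvg nrm u l ->
  norm_cvg nH (fun n => u n i) (l i).
Proof.
move=> hu hl hc e he; have [N hN] := hc e he; exists N => n hn.
apply: le_lt_trans (hN n hn).
have -> : u n i - l i = (u n - l) i by [].
by apply: Hcoord; apply: (DB NS).
Qed.

Lemma cvg_cst0 : norm_cvg nH (fun _ => (0 : V)) 0.
Proof. by move=> e he; exists 0%N => n _; rewrite subrr ipn0. Qed.

Lemma cvg_scale (k : C) v l : norm_cvg nH v l -> norm_cvg nH (fun n => k *: v n) (k *: l).
Proof.
move=> hc e he.
have hk := nabs_ge0 k.
have he' : 0 < e / (nabs k + 1) by rewrite divr_gt0 // ltr_pwDr.
have [N hN] := hc _ he'; exists N => n hn.
rewrite -scalerBr ipn_hom //.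
have := hN n hn; rewrite ltr_pdivlMr ?ltr_pwDr // => h.
have := ipn_ge0 ip (v n - l); nra.
Qed.

Lemma zero_lim u l : (forall n, u n = 0) -> norm_cvg nH u l -> l = 0.
Proof.
move=> h0 hc; symmetry; apply: (ipn_cvg_uniq Hip (u := fun _ => 0)) => //.
  exact: cvg_cst0.
by move=> e he; have [N hN] := hc e he; exists N => n hn; rewrite -(h0 n); apply: hN.
Qed.

Lemma Fset_closed (S : pred I) : [set x | forall i, S i -> x i = 0] `<=` D ->
  closed_subspace D nrm [set x | forall i, S i -> x i = 0].
Proof.
move=> hsub; split.
- exact: hsub.
- by move=> i _.
- move=> a x y hx hy i hi; have -> : (a *: x + y) i = a *: x i + y i by [].
  by rewrite (hx i hi) (hy i hi) scaler0 addr0.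
- move=> u l hu hl hc i hi.
  apply: (zero_lim (u := fun n => u n i)); first by move=> n; apply: hu.
  by apply: cvg_coord => // n; apply: hsub; apply: hu.
Qed.

Lemma Qset_closed (beta : I -> C) (j0 : I) : beta j0 != 0 ->
  [set x | exists h, forall i, x i = beta i *: h] `<=` D ->
  closed_subspace D nrm [set x | exists h, forall i, x i = beta i *: h].
Proof.
move=> hb hsub; split.
- exact: hsub.
- by exists 0 => i; rewrite scaler0.
- move=> a x y [h1 e1] [h2 e2]; exists (a *: h1 + h2) => i.
  have -> : (a *: x + y) i = a *: x i + y i by [].
  by rewrite e1 e2 scalerDr !scalerA mulrC.
- move=> u l hu hl hc.
  have hD : forall n, D (u n) by move=> n; apply: hsub; apply: hu.
  exists ((beta j0)^-1 *: l j0) => i.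
  rewrite scalerA.
  have c1 := cvg_coord i hD hl hc.
  have c0 := cvg_scale (beta i / beta j0) (cvg_coord j0 hD hl hc).
  have eq : (fun n => u n i) = (fun n => (beta i / beta j0) *: u n j0).
    apply/funext => n; have [h eh] := hu n; rewrite !eh scalerA divfK //.
  rewrite eq in c1.
  exact: (ipn_cvg_uniq Hip c1 c0).
Qed.

Lemma E11_closed (i0 : I) P : closed_subspace setT nH P -> closed_subspace D nrm (E11 i0 D P).
Proof.
move=> hP; split.
- by move=> x [].
- split; first exact: ns0 NS. split; first exact: cs0 hP. by [].
- move=> a x y [hx1 [hx2 hx3]] [hy1 [hy2 hy3]]; split; first exact: (nsc NS).
  split; first exact: (csc hP).
  move=> i hi; have -> : (a *: x + y) i = a *: x i + y i by [].
  by rewrite hx3 // hy3 // scaler0 addr0.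
- move=> u l hu hl hc; split => //.
  have hD : forall n, D (u n) by move=> n; case: (hu n).
  split.
    case: (hP) => _ _ _ h4; apply: (h4 (fun n => u n i0)) => //.
      by move=> n; case: (hu n) => _ [].
    exact: cvg_coord.
  move=> i hi; apply: (zero_lim (u := fun n => u n i)).
    by move=> n; case: (hu n) => _ [_ h]; apply: h.
  exact: cvg_coord.
Qed.

End Shapes.

Lemma min_nat (P : nat -> Prop) : (exists n, P n) -> exists m, P m /\ forall n, P n -> (m <= n)%N.
Proof.
move=> [n hn].
have ex : exists n, `[< P n >] by exists n; apply/asboolP.
have [m hm hmin] := find_ex_minn ex.
exists m; split; first exact/asboolP.
by move=> k hk; apply: hmin; apply/asboolP.
Qed.

Section Fin.
Variable R : realType.
Local Notation C := R[i].
Variable V : lmodType C.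
Variable ip : V -> V -> C.
Hypothesis Hip : is_inner_product ip.
Local Notation nH := (ip_norm ip).
Variable L0 : set (set V).
Hypothesis HL0T : L0 setT.
Hypothesis HL0 : forall P, L0 P -> closed_subspace setT nH P.
Variable n0 : nat.
Hypothesis hn : (2 <= n0)%N.
Variable a : 'I_n0 -> C.
Hypothesis ha : forall i, a i != 0.

Let h0 : (0 < n0)%N. Proof. by apply: leq_trans hn. Qed.
Let h1 : (1 < n0)%N. Proof. exact: hn. Qed.
Let i0 : 'I_n0 := Ordinal h0.
Let i1 : 'I_n0 := Ordinal h1.
Let i10 : i1 != i0. Proof. by []. Qed.
Local Notation Kn := (Kn_norm nH (n0:=n0)).

Lemma NSn : nspace [set: 'I_n0 -> V] Kn.
Proof.
split => //.
- by move=> x; apply: sqrtr_ge0.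
- move=> x _ /eqP; rewrite sqrtr_eq0 => hle.
  have hge : 0 <= \sum_(i < n0) nH (x i) ^+ 2 by apply: sumr_ge0 => i _; apply: exprn_ge0; apply: ipn_ge0.
  have h : \sum_(i < n0) nH (x i) ^+ 2 = 0 by apply/eqP; rewrite eq_le hle hge.
  apply/funext => i; apply: (ipn_def Hip); apply/eqP; rewrite -sqrf_eq0; apply/eqP.
  by apply: (psumr_eq0P _ h) => // j _; apply: exprn_ge0; apply: ipn_ge0.
- move=> c x _; rewrite /Kn_norm.
  rewrite (eq_bigr (fun i => nabs c ^+ 2 * nH (x i) ^+ 2)); last first.
    by move=> i _; rewrite (_ : (c *: x) i = c *: x i) // ipn_hom // exprMn.
  rewrite -mulr_sumr sqrtrM ?exprn_ge0 ?nabs_ge0 // sqrtr_sqr ger0_norm //.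
  exact: nabs_ge0.
Qed.

Lemma e0n v : Kn (e0 i0 v) = nH v.
Proof.
rewrite /Kn_norm (bigD1 i0) //= e0_i0 big1 ?addr0.
  by rewrite sqrtr_sqr ger0_norm //; apply: ipn_ge0.
by move=> i hi; rewrite /e0 (negbTE hi) ipn0 // expr0n.
Qed.

Lemma coordn x i : nH (x i) <= Kn x.
Proof.
rewrite -(ger0_norm (ipn_ge0 ip (x i))) -sqrtr_sqr /Kn_norm; apply: ler_wsqrtr.
rewrite (bigD1 i) //= lerDl; apply: sumr_ge0 => j _; apply: exprn_ge0; apply: ipn_ge0.
Qed.

Lemma gensE11 P : [set x : 'I_n0 -> V | forall i : 'I_n0, if (i == 0 :> nat) then P (x i) else x i = 0]
  = E11 i0 setT P.
Proof.
apply/seteqP; split => x.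
- move=> h; split => //; split; first by have := h i0.
  move=> i hi; have := h i; case: eqP => // hi0.
  by move: hi; have -> : i = i0 by apply: val_inj.
- move=> [_ [hP hz]] i; case: eqP => hi0.
    by have -> : i = i0 by apply: val_inj.
  by apply: hz; apply/eqP => hii; apply: hi0; rewrite hii.
Qed.

Local Notation G := (gens_n L0 a).

Lemma HGcn E : G E -> closed_subspace setT Kn E.
Proof.
have hc : forall x i, setT x -> nH (x i) <= Kn x by move=> x i _; apply: coordn.
case=> [[P [hP ->]]|[->|[k [hk ->]]]].
- rewrite gensE11; apply: (E11_closed Hip NSn hc); exact: HL0.
- exact: (@Qset_closed _ _ _ Hip _ _ _ NSn hc a i0 (ha i0) (fun _ _ => Logic.I)).
- exact: (@Fset_closed _ _ _ Hip _ _ _ NSn hc (fun i : 'I_n0 => (k <= i)%N) (fun _ _ => Logic.I)).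
Qed.

Lemma HGEn P : L0 P -> G (E11 i0 setT P).
Proof. by move=> hP; left; exists P; split => //; rewrite gensE11. Qed.

Lemma HGtn E : G E -> (exists P, L0 P /\ E = E11 i0 setT P) \/
   (forall z, E z -> z i0 = (a i0 / a i1) *: z i1) \/ (forall v, E (e0 i0 v)).
Proof.
case=> [[P [hP ->]]|[->|[k [hk ->]]]].
- by left; exists P; rewrite gensE11.
- right; left => z [h eh]; rewrite !eh scalerA divfK //.
- right; right => v i hi; rewrite /e0; case: eqP => // hii.
  by move: hi; rewrite hii /=; case/andP: hk => hk _; move=> h; move: (leq_trans hk h).
Qed.

Lemma HWn u g : setT u -> u != 0 -> glin setT g -> gbnd setT Kn g ->
  (exists x, setT x /\ g x != 0) -> (forall h, g (e0 i0 h) = 0) ->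
  (forall E z, G E -> E z -> E (g z *: u)) ->
  exists w, setT w /\ g w = 1 /\ forall E z, G E -> E z -> g z != 0 -> E w.
Proof.
move=> _ hu0 hgl hgb [x0 [_ hx0]] hz inv.
pose Q := [set x : 'I_n0 -> V | exists h, forall i, x i = a i *: h].
have GQ : G Q by right; left.
have hE11 : forall P z, [set x : 'I_n0 -> V | forall i : 'I_n0, if (i == 0 :> nat) then P (x i) else x i = 0] z -> g z != 0 -> False.
  move=> P z; rewrite gensE11 => hz' hg; move: hg.
  by rewrite (E11_e0 hz') hz eqxx.
have scl : forall z, g z != 0 -> g ((g z)^-1 *: z) = 1.
  by move=> z hg; rewrite (gZ NSn hgl) // mulVf.
case: (pselect (exists z, Q z /\ g z != 0)) => [[z [hQz hgz]]|hQ].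
  exists ((g z)^-1 *: z); split => //; split; first exact: scl.
  move=> E z' hE hz' hgz'; case: (hE) => [[P [hP hEq]]|[hEq|[k [hk hEq]]]].
  - by exfalso; rewrite hEq in hz'; apply: hE11 hz' hgz'.
  - rewrite hEq; case: hQz => h eh; exists ((g z)^-1 *: h) => i.
    by rewrite (_ : ((g z)^-1 *: z) i = (g z)^-1 *: z i) // eh !scalerA mulrC.
  - have [hlt|hge] := ltnP k n0; last first.
      rewrite hEq => i hi; exfalso; have := leq_trans hge hi; by rewrite leqNgt ltn_ord.
    exfalso.
    have hFu : E u by apply: (csZV (HGcn hE) hgz'); apply: inv hE hz'.
    have hQu : Q u by apply: (csZV (HGcn GQ) hgz); apply: inv GQ hQz.
    have hj : (n0.-1 < n0)%N by rewrite ltn_predL h0.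
    pose j := Ordinal hj.
    case: hQu => h' eh'.
    have uj : u j = 0 by move: hFu; rewrite hEq => hF; apply: hF => /=; rewrite -ltnS prednK.
    move: uj; rewrite eh' => /eqP; rewrite scaler_eq0 (negbTE (ha j)) /= => /eqP h0'.
    move: hu0; have -> : u = 0 by apply/funext => i; rewrite eh' h0' scaler0.
    by rewrite eqxx.
have hQ0 : forall z, Q z -> g z = 0.
  by move=> z hQz; case: (eqVneq (g z) 0) => // hne; exfalso; apply: hQ; exists z.
pose Pk k := (2 <= k <= n0)%N /\ exists z : 'I_n0 -> V, (forall i : 'I_n0, (k <= i)%N -> z i = 0) /\ g z != 0.
have [k0 [[hk0 [z0 [hz0 hgz0]]] hmin]] : exists m, Pk m /\ forall n, Pk n -> (m <= n)%N.
  apply: min_nat; exists n0; split; first by rewrite hn leqnn.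
  exists x0; split => // i hi; exfalso; move: hi; by rewrite leqNgt ltn_ord.
exists ((g z0)^-1 *: z0); split => //; split; first exact: scl.
move=> E z' hE hz' hgz'; case: (hE) => [[P [hP hEq]]|[hEq|[k [hk hEq]]]].
- by exfalso; rewrite hEq in hz'; apply: hE11 hz' hgz'.
- by exfalso; rewrite hEq in hz'; move: hgz'; rewrite hQ0 // eqxx.
- have hkk : (k0 <= k)%N.
    apply: hmin; split => //; exists z'; split => //.
    by move: hz'; rewrite hEq.
  rewrite hEq => i hi.
  by rewrite (_ : ((g z0)^-1 *: z0) i = (g z0)^-1 *: z0 i) // hz0 ?scaler0 // (leq_trans hkk hi).
Qed.

End Fin.
Section Psum.
Variable R : realType.
Definition psum (f : nat -> R) (N : nat) := \sum_(n < N) f n.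
Variable f : nat -> R.
Hypothesis f0 : forall n, 0 <= f n.
Lemma psum_ge0 N : 0 <= psum f N.
Proof. by apply: sumr_ge0 => i _; apply: f0. Qed.
Lemma psumS N : psum f N.+1 = psum f N + f N.
Proof. by rewrite /psum big_ord_recr. Qed.
Lemma psum0 : psum f 0 = 0.
Proof. by rewrite /psum big_ord0. Qed.
Lemma psum_mono N M : (N <= M)%N -> psum f N <= psum f M.
Proof.
move=> hNM; rewrite -(subnKC hNM); elim: (M - N)%N => [|d IH]; first by rewrite addn0.
by rewrite addnS psumS; apply: le_trans IH _; rewrite lerDl f0.
Qed.
Lemma psum_stable k : (forall i, (k <= i)%N -> f i = 0) -> forall N, psum f N <= psum f k.
Proof.
move=> hk; elim=> [|N IH]; first by rewrite psum0 psum_ge0.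
have [hlt|hge] := ltnP N k; first exact: psum_mono.
by rewrite psumS hk // addr0.
Qed.
Lemma psum_term N : f N <= psum f N.+1.
Proof. by rewrite psumS lerDr psum_ge0. Qed.
End Psum.

Section SupL.
Variable R : realType.
Variable f : nat -> R.
Hypothesis f0 : forall n, 0 <= f n.
Local Notation S := [set psum f N | N in [set: nat]].
Lemma S_ne : S !=set0. Proof. by exists (psum f 0); exists 0%N. Qed.
Lemma S_le_sup N : has_ubound S -> psum f N <= sup S.
Proof. by move=> h; apply: (ub_le_sup h); exists N. Qed.
Lemma sup_le_S M : (forall N, psum f N <= M) -> sup S <= M.
Proof. by move=> h; apply: ge_sup; [exact: S_ne | move=> z [N _ <-]]. Qed.
Lemma S_bnd M : (forall N, psum f N <= M) -> has_ubound S.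
Proof. by move=> h; exists M => z [N _ <-]. Qed.
Lemma sup_ge0 : has_ubound S -> 0 <= sup S.
Proof. by move=> h; apply: le_trans (S_le_sup 0 h); rewrite psum0. Qed.
End SupL.
Section Inf.
Variable R : realType.
Local Notation C := R[i].
Variable V : lmodType C.
Variable ip : V -> V -> C.
Hypothesis Hip : is_inner_product ip.
Local Notation nH := (ip_norm ip).
Local Notation D := (Kinf_dom nH).
Local Notation nrm := (Kinf_norm nH).
Local Notation sq x := (fun n => nH (x n) ^+ 2).

Lemma sq0 (x : nat -> V) n : 0 <= sq x n.
Proof. by apply: exprn_ge0; apply: ipn_ge0. Qed.

Lemma l2E (x : nat -> V) : l2_partial nH x = [set psum (sq x) N | N in [set: nat]].
Proof. by []. Qed.

Lemma Dbnd (x : nat -> V) M : (forall N, psum (sq x) N <= M) -> D x.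
Proof. by move=> h; rewrite /Kinf_dom /= l2E; apply: S_bnd h. Qed.

Lemma Dle (x : nat -> V) N : D x -> psum (sq x) N <= sup (l2_partial nH x).
Proof. by move=> h; rewrite l2E; apply: S_le_sup; rewrite -l2E. Qed.

Lemma sup_le (x : nat -> V) M : (forall N, psum (sq x) N <= M) -> sup (l2_partial nH x) <= M.
Proof. by move=> h; rewrite l2E; apply: sup_le_S. Qed.

Lemma psumZ (c : C) (x : nat -> V) N : psum (sq (c *: x)) N = nabs c ^+ 2 * psum (sq x) N.
Proof.
rewrite /psum mulr_sumr; apply: eq_bigr => i _.
by rewrite (_ : (c *: x) i = c *: x i) // ipn_hom // exprMn.
Qed.

Lemma NSinf : nspace D nrm.
Proof.
split.
- apply: (Dbnd (M := 0)) => N; rewrite /psum big1 // => i _.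
  by rewrite (_ : (0 : nat -> V) i = 0) // ipn0 // expr0n.
- move=> c x y hx hy.
  apply: (Dbnd (M := 2 * nabs c ^+ 2 * sup (l2_partial nH x) + 2 * sup (l2_partial nH y))) => N.
  apply: (@le_trans _ _ (2 * nabs c ^+ 2 * psum (sq x) N + 2 * psum (sq y) N)); last first.
    apply: lerD; last by apply: ler_wpM2l => //; apply: Dle.
    rewrite -mulrA -[X in _ <= X]mulrA; apply: ler_wpM2l => //.
    apply: ler_wpM2l; [exact: exprn_ge0 (nabs_ge0 _) | exact: Dle].
  rewrite /psum -mulrA !mulr_sumr -big_split /=; apply: ler_sum => i _.
  rewrite (_ : (c *: x + y) i = c *: x i + y i) //.
  by apply: le_trans (ipn_par Hip _ _) _; rewrite ipn_hom // exprMn mulrA.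
- by move=> x; apply: sqrtr_ge0.
- move=> x hx /eqP; rewrite sqrtr_eq0 => hle.
  apply/funext => n; apply: (ipn_def Hip); apply/eqP; rewrite -sqrf_eq0 eq_le sq0 andbT.
  apply: le_trans (psum_term (sq0 x) n) _; apply: le_trans hle; exact: Dle.
- move=> c x hx; rewrite /Kinf_norm.
  have hcx : D (c *: x).
    by apply: (Dbnd (M := nabs c ^+ 2 * sup (l2_partial nH x))) => N; rewrite psumZ; apply: ler_wpM2l; [exact: exprn_ge0 (nabs_ge0 _) | exact: Dle].
  have hk := exprn_ge0 2 (nabs_ge0 c).
  suff -> : sup (l2_partial nH (c *: x)) = nabs c ^+ 2 * sup (l2_partial nH x).
    by rewrite sqrtrM // sqrtr_sqr ger0_norm // nabs_ge0.
  apply/eqP; rewrite eq_le; apply/andP; split.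
    by apply: sup_le => N; rewrite psumZ; apply: ler_wpM2l => //; apply: Dle.
  have [k0|kp] := eqVneq (nabs c ^+ 2) 0.
    rewrite k0 mul0r; rewrite l2E; apply: sup_ge0; rewrite -l2E; exact: hcx.
  have kpos : 0 < nabs c ^+ 2 by rewrite lt_neqAle eq_sym kp hk.
  rewrite mulrC -ler_pdivlMr //; apply: sup_le => N.
  by rewrite ler_pdivlMr // mulrC -psumZ; apply: Dle.
Qed.

Lemma psum_e0 v N : psum (sq (e0 0%N v)) N = if N is N'.+1 then nH v ^+ 2 else 0.
Proof.
case: N => [|N]; first by rewrite psum0.
rewrite /psum big_ord_recl /= big1 ?addr0.
  by rewrite (_ : e0 0%N v 0%N = v) // /e0 eqxx.
move=> i _; rewrite /e0 /=.
by rewrite ipn0 // expr0n.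
Qed.

Lemma He0Dinf v : D (e0 0%N v).
Proof.
apply: (Dbnd (M := nH v ^+ 2)) => N; rewrite psum_e0.
by case: N => [|N]; [apply: exprn_ge0; apply: ipn_ge0 | exact: lexx].
Qed.

Lemma He0ninf v : nrm (e0 0%N v) = nH v.
Proof.
rewrite /Kinf_norm.
suff -> : sup (l2_partial nH (e0 0%N v)) = nH v ^+ 2.
  by rewrite sqrtr_sqr ger0_norm //; apply: ipn_ge0.
apply/eqP; rewrite eq_le; apply/andP; split.
  apply: sup_le => N; rewrite psum_e0.
  by case: N => [|N]; [apply: exprn_ge0; apply: ipn_ge0 | exact: lexx].
by have := Dle 1 (He0Dinf v); rewrite psum_e0.
Qed.

Lemma Hcoordinf x i : D x -> nH (x i) <= nrm x.
Proof.
move=> hx; rewrite -(ger0_norm (ipn_ge0 ip (x i))) -sqrtr_sqr /Kinf_norm; apply: ler_wsqrtr.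
apply: le_trans (psum_term (sq0 x) i) _; exact: Dle.
Qed.

Lemma FsubD k : [set x : nat -> V | forall i, (k <= i)%N -> x i = 0] `<=` D.
Proof.
move=> x hx; apply: (Dbnd (M := psum (sq x) k)); apply: psum_stable; first exact: sq0.
by move=> i hi; rewrite /= hx // ipn0 // expr0n.
Qed.

Variable b : nat -> C.
Hypothesis hb : unit_vec_l2 b.
Hypothesis hb0 : forall n, b n != 0.

Lemma bsq n : complex.Re (`|b n| ^+ 2) = nabs (b n) ^+ 2.
Proof. by rewrite nabsE -rmorphXn. Qed.

Lemma bbnd N : psum (fun n => nabs (b n) ^+ 2) N <= 2.
Proof.
have f0 : forall n, 0 <= nabs (b n) ^+ 2 by move=> n; apply: exprn_ge0; apply: nabs_ge0.
have h01 : (0 : R) < 1 := ltr01.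
have [N1 hN1] := hb h01.
have := hN1 (maxn N N1) (leq_maxr _ _).
have e : \sum_(n < maxn N N1) complex.Re (`|b n| ^+ 2) = psum (fun n => nabs (b n) ^+ 2) (maxn N N1).
  by apply: eq_bigr => i _; rewrite bsq.
rewrite e => h.
apply: le_trans (psum_mono f0 (leq_maxl N N1)) _.
have := ler_norm (psum (fun n => nabs (b n) ^+ 2) (maxn N N1) - 1).
lra.
Qed.

Lemma QsubD : [set x : nat -> V | exists h, forall i, x i = b i *: h] `<=` D.
Proof.
move=> x [h eh]; apply: (Dbnd (M := nH h ^+ 2 * 2)) => N.
have -> : psum (sq x) N = nH h ^+ 2 * psum (fun n => nabs (b n) ^+ 2) N.
  rewrite /psum mulr_sumr; apply: eq_bigr => i _; rewrite eh ipn_hom // exprMn mulrC //.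
by apply: ler_wpM2l; [apply: exprn_ge0; apply: ipn_ge0 | exact: bbnd].
Qed.

Variable L0 : set (set V).
Hypothesis hcl : forall P, L0 P -> closed_subspace setT nH P.
Local Notation G := (gens_inf nH L0 b).

Lemma HGcinf E : G E -> closed_subspace D nrm E.
Proof.
have hc : forall (x : nat -> V) i, D x -> nH (x i) <= nrm x by move=> x i; apply: Hcoordinf.
case=> [[P [hP ->]]|[->|[k [hk ->]]]].
- exact: (@E11_closed _ _ _ Hip _ _ _ NSinf hc 0%N P (hcl hP)).
- exact: (@Qset_closed _ _ _ Hip _ _ _ NSinf hc b 0%N (hb0 0) QsubD).
- have := (@Fset_closed _ _ _ Hip _ _ _ NSinf hc (fun i => (k <= i)%N)).
  by move=> h; apply: h => x hx; apply: (FsubD hx).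
Qed.

Lemma HGEinf P : L0 P -> G (E11 0%N D P).
Proof. by move=> hP; left; exists P. Qed.

Lemma HGtinf E : G E -> (exists P, L0 P /\ E = E11 0%N D P) \/
   (forall z, E z -> z 0%N = (b 0%N / b 1%N) *: z 1%N) \/ (forall v, E (e0 0%N v)).
Proof.
case=> [[P [hP ->]]|[->|[k [hk ->]]]].
- by left; exists P.
- right; left => z [h eh]; rewrite !eh scalerA divfK //.
- right; right => v i hi; rewrite /e0; case: eqP => // hii.
  by move: hi; rewrite hii => h; move: (leq_trans hk h).
Qed.

Lemma HWinf u g : D u -> u != 0 -> glin D g -> gbnd D nrm g ->
  (exists x, D x /\ g x != 0) -> (forall h, g (e0 0%N h) = 0) ->
  (forall E z, G E -> E z -> E (g z *: u)) ->
  exists w, D w /\ g w = 1 /\ forall E z, G E -> E z -> g z != 0 -> E w.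
Proof.
move=> hu hu0 hgl hgb [x0 [hx0 hgx0]] hz inv.
pose Q := [set x : nat -> V | exists h, forall i, x i = b i *: h].
have GQ : G Q by right; left.
have hE11 : forall P z, E11 0%N D P z -> g z != 0 -> False.
  move=> P z hz' hg; move: hg.
  by rewrite (E11_e0 hz') hz eqxx.
have scl : forall z, D z -> g z != 0 -> g ((g z)^-1 *: z) = 1.
  by move=> z hzD hg; rewrite (gZ NSinf hgl) // mulVf.
case: (pselect (exists z, Q z /\ g z != 0)) => [[z [hQz hgz]]|hQ].
  exists ((g z)^-1 *: z); split; first by apply: (DZ NSinf); apply: QsubD.
  split; first by apply: scl => //; apply: QsubD.
  move=> E z' hE hz' hgz'; case: (hE) => [[P [hP hEq]]|[hEq|[k [hk hEq]]]].
  - by exfalso; rewrite hEq in hz'; apply: hE11 hz' hgz'.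
  - rewrite hEq; case: hQz => h eh; exists ((g z)^-1 *: h) => i.
    by rewrite (_ : ((g z)^-1 *: z) i = (g z)^-1 *: z i) // eh !scalerA mulrC.
  - exfalso.
    have hFu : E u by apply: (csZV (HGcinf hE) hgz'); apply: inv hE hz'.
    have hQu : Q u by apply: (csZV (HGcinf GQ) hgz); apply: inv GQ hQz.
    case: hQu => h' eh'.
    have uj : u k = 0 by move: hFu; rewrite hEq => hF; apply: hF.
    move: uj; rewrite eh' => /eqP; rewrite scaler_eq0 (negbTE (hb0 k)) /= => /eqP h0'.
    move: hu0; have -> : u = 0 by apply/funext => i; rewrite eh' h0' scaler0.
    by rewrite eqxx.
have hQ0 : forall z, Q z -> g z = 0.
  by move=> z hQz; case: (eqVneq (g z) 0) => // hne; exfalso; apply: hQ; exists z.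
pose Pk k := (2 <= k)%N /\ exists z : nat -> V, (forall i, (k <= i)%N -> z i = 0) /\ g z != 0.
case: (pselect (exists k, Pk k)) => [hex|hnex].
  have [k0 [[hk0 [z0 [hz0 hgz0]]] hmin]] := min_nat hex.
  have hz0D : D z0 by apply: (FsubD hz0).
  exists ((g z0)^-1 *: z0); split; first exact: (DZ NSinf).
  split; first exact: scl.
  move=> E z' hE hz' hgz'; case: (hE) => [[P [hP hEq]]|[hEq|[k [hk hEq]]]].
  - by exfalso; rewrite hEq in hz'; apply: hE11 hz' hgz'.
  - by exfalso; rewrite hEq in hz'; move: hgz'; rewrite hQ0 // eqxx.
  - have hkk : (k0 <= k)%N.
      apply: hmin; split => //; exists z'; split => //.
      by move: hz'; rewrite hEq.
    rewrite hEq => i hi.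
    by rewrite (_ : ((g z0)^-1 *: z0) i = (g z0)^-1 *: z0 i) // hz0 ?scaler0 // (leq_trans hkk hi).
exists ((g x0)^-1 *: x0); split; first exact: (DZ NSinf).
split; first exact: scl.
move=> E z' hE hz' hgz'; case: (hE) => [[P [hP hEq]]|[hEq|[k [hk hEq]]]].
- by exfalso; rewrite hEq in hz'; apply: hE11 hz' hgz'.
- by exfalso; rewrite hEq in hz'; move: hgz'; rewrite hQ0 // eqxx.
- exfalso; apply: hnex; exists k; split => //; exists z'; split => //.
  by move: hz'; rewrite hEq.
Qed.

End Inf.
Theorem mainTheorem4 (R : realType) (V : lmodType R[i]) (ip : V -> V -> R[i])
  (HH : complex_hilbert_space ip)
  (L0 : set (set V))
  (HL0c : complete_subspace_lattice [set: V] (ip_norm ip) L0)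
  (HL0r : reflexive_lattice [set: V] (ip_norm ip) L0) :
  (forall (n0 : nat) (a : 'I_n0 -> R[i]),
      (2 <= n0)%N -> unit_vec_fin a -> (forall i, a i != 0) ->
      R1_sub_Id [set: 'I_n0 -> V] (Alg [set: 'I_n0 -> V] (@Kn_norm R V (ip_norm ip) n0)
                                        (L_n (ip_norm ip) L0 a))
      <-> R1_sub_Id [set: V] (Alg [set: V] (ip_norm ip) L0))
  /\
  (forall b : nat -> R[i],
      unit_vec_l2 b -> (forall n, b n != 0) ->
      R1_sub_Id (Kinf_dom (ip_norm ip))
        (Alg (Kinf_dom (ip_norm ip)) (Kinf_norm (ip_norm ip)) (L_inf (ip_norm ip) L0 b))
      <-> R1_sub_Id [set: V] (Alg [set: V] (ip_norm ip) L0)).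
Proof.
have Hip : is_inner_product ip by case: HH.
case: HL0c => [[hcl h0 hT hspan hmeet] _].
split.
- move=> n0 a hn hu ha.
  have hc : forall (x : 'I_n0 -> V) i, setT x -> ip_norm ip (x i) <= Kn_norm (ip_norm ip) x.
    by move=> x i _; apply: coordn.
  split.
  + apply: (coord_fwd Hip _ (NSn Hip hn) _ (e0n Hip hn) hc hT (HGcn Hip hcl hn ha) (HGEn hn a) (HGtn hn ha)) => //.
  + apply: (coord_bwd Hip _ (NSn Hip hn) _ (e0n Hip hn) hc hT (HGcn Hip hcl hn ha) (HGEn hn a) (HGtn hn ha)) => //.
    move=> u g hu1 hu0 hgl hgb hnz hz hinv; exact: (HWn Hip hcl ha hu1 hu0 hgl hgb hnz hz hinv).
- move=> b hb hb0.
  have hc : forall (x : nat -> V) i, Kinf_dom (ip_norm ip) x -> ip_norm ip (x i) <= Kinf_norm (ip_norm ip) x.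
    by move=> x i hx; apply: Hcoordinf.
  have i10 : (1 != 0)%N by [].
  split.
  + apply: (coord_fwd Hip i10 (NSinf Hip) (He0Dinf Hip) (He0ninf Hip) hc hT (HGcinf Hip hb hb0 hcl) (fun P hP => HGEinf ip b hP) (fun E hE => HGtinf hb0 hE)) => //.
  + apply: (coord_bwd Hip i10 (NSinf Hip) (He0Dinf Hip) (He0ninf Hip) hc hT (HGcinf Hip hb hb0 hcl) (fun P hP => HGEinf ip b hP) (fun E hE => HGtinf hb0 hE)) => //.
    move=> u g hu1 hu0 hgl hgb hnz hz hinv; exact: (HWinf Hip hb hb0 hcl hu1 hu0 hgl hgb hnz hz hinv).
Qed.
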